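(* Let $\epsilon>0$ (or any complex $\epsilon$), $n\in\mathbb{Z}$, and $\vec n=(n,\dots,n)\in\mathbb{Z}^k$. Then $$(\epsilon-z_2)(\epsilon-z_3)\cdots(\epsilon-z_k)\ \overset{\vec n}{\approx}\ \sum_{i=0}^{k-1}c_\epsilon(k,i)(\epsilon-z_1)\cdots(\epsilon-z_i),\qquad c_\epsilon(k,i)=\epsilon^{k-i-1}q^i\frac{(q;q)_{k-1}}{(q;q)_i},$$ where the $i=0$ term of the product is $1$.
   Context: Fix $q\in(0,1)$, $k\ge1$; $(a;q)_n=\prod_{i=0}^{n-1}(1-q^ia)$. For $\vec n\in\mathbb{Z}^k$ and two functions $f,g:\mathbb{C}^k\to\mathbb{C}$, write $f\overset{\vec n}{\approx}g$ if, identically in $\vec z$ (as rational functions), $$\sum_{\sigma\in S_k}\prod_{1\le B<A\le k}\frac{z_{\sigma(A)}-q^{-1}z_{\sigma(B)}}{z_{\sigma(A)}-z_{\sigma(B)}}\prod_{j=1}^k(\epsilon-z_{\sigma(j)})^{n_j}\Big(f(z_{\sigma(1)},\dots,z_{\sigma(k)})-g(z_{\sigma(1)},\dots,z_{\sigma(k)})\Big)=0.$$ *)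

(* Defs.v *)
From HB Require Import structures.
From mathcomp Require Import all_boot all_order all_algebra all_fingroup.
Set Implicit Arguments. Unset Strict Implicit. Unset Printing Implicit Defensive.
Import Order.TTheory GRing.Theory Num.Theory.
Local Open Scope ring_scope.

Definition qpoch (C : ringType) (a q : C) (n : nat) : C :=
  \prod_(i < n) (1 - q ^+ i * a).

(* The relation f ~(n-vector) g, stated as an identity of rational functions
   in z: equivalently, vanishing at every point where all denominators are
   nonzero (pairwise distinct coordinates, and z_j <> eps for the possibly
   negative powers (eps - z_j)^{n_j}), a Zariski-dense set. Indices are 0-based:
   z : 'I_k -> C, and (z \o s) is (z_{s(1)},...,z_{s(k)}). *)
Definition approx_rel (C : numClosedFieldType) (q eps : C) (k : nat)
    (nv : 'I_k -> int) (f g : ('I_k -> C) -> C) : Prop :=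
  forall z : 'I_k -> C,
    (forall i j, z i = z j -> i = j) ->
    (forall j, z j != eps) ->
    \sum_(s : 'S_k)
       ((\prod_(A : 'I_k) \prod_(B : 'I_k | (B < A)%N)
            ((z (s A) - q^-1 * z (s B)) / (z (s A) - z (s B))))
        * (\prod_(j : 'I_k) (eps - z (s j)) ^ (nv j))
        * (f (fun j => z (s j)) - g (fun j => z (s j)))) = 0.

Definition c_eps (C : fieldType) (q eps : C) (k i : nat) : C :=
  eps ^+ (k - i - 1) * q ^+ i * qpoch q q (k - 1) / qpoch q q i.

(* Main.v *)
Require Import Defs.
From HB Require Import structures.
From mathcomp Require Import all_boot all_order all_algebra all_fingroup.
From mathcomp Require Import zify ring lra.
From Stdlib Require Import FunctionalExtensionality.
Import Order.TTheory GRing.Theory Num.Theory.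
Local Open Scope ring_scope.

Section Sym.
Variables (C : numClosedFieldType) (q eps : C) (K : nat) (n : int) (z : 'I_K.+1 -> C).
Local Notation k := K.+1.
Hypothesis q0 : q != 0.
Hypothesis qpos : 0 < q.
Hypothesis qlt1 : q < 1.

Definition Gt (s : 'S_k) (A B : 'I_k) : C :=
  (z (s A) - q^-1 * z (s B)) / (z (s A) - z (s B)).
Definition Wt (s : 'S_k) : C :=
  \prod_(A : 'I_k) \prod_(B : 'I_k | (B < A)%N) Gt s A B.
Definition Ef (s : 'S_k) : C := \prod_(j : 'I_k) (eps - z (s j)) ^ n.
Definition Phi (F : ('I_k -> C) -> C) : C :=
  \sum_(s : 'S_k) Wt s * Ef s * F (fun j => z (s j)).

Lemma Phi_ext F G : (forall y, F y = G y) -> Phi F = Phi G.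
Proof. by move=> h; apply: eq_bigr => s _; rewrite h. Qed.

Lemma PhiB F G : Phi (fun y => F y - G y) = Phi F - Phi G.
Proof. by rewrite /Phi -sumrB; apply: eq_bigr => s _; rewrite mulrBr. Qed.

Lemma PhiD F G : Phi (fun y => F y + G y) = Phi F + Phi G.
Proof. by rewrite /Phi -big_split; apply: eq_bigr => s _; rewrite mulrDr. Qed.

Lemma PhiZ c F : Phi (fun y => c * F y) = c * Phi F.
Proof.
rewrite /Phi mulr_sumr; apply: eq_bigr => s _.
by rewrite mulrA [_ * c]mulrC -!mulrA.
Qed.

Lemma Phi_sum m (F : 'I_m -> ('I_k -> C) -> C) :
  Phi (fun y => \sum_(i < m) F i y) = \sum_(i < m) Phi (F i).
Proof.
rewrite /Phi exchange_big /=; apply: eq_bigr => s _.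
by rewrite mulr_sumr.
Qed.


Lemma pair_cond (m1 m2 A B : 'I_k) : val m2 = (val m1).+1 ->
  ((tperm m1 m2 B < tperm m1 m2 A)%N && ((tperm m1 m2 A, tperm m1 m2 B) != (m2, m1)))
  = ((B < A)%N && ((A, B) != (m2, m1))).
Proof.
move=> hm.
have e1 : forall x y : 'I_k, (x == y) = (nat_of_ord x == nat_of_ord y) by [].
have {}hm : nat_of_ord m2 = (nat_of_ord m1).+1 := hm.
case: (tpermP m1 m2 A) => [->|->|]; case: (tpermP m1 m2 B) => [->|->|];
  rewrite !xpair_eqE ?eqxx /= ?e1 ?hm; intros; apply/idP/idP; lia.
Qed.

Lemma Wt_split (s : 'S_k) (m1 m2 : 'I_k) : val m2 = (val m1).+1 ->
  Wt s = Gt s m2 m1 * \prod_(p : 'I_k * 'I_k | (p.2 < p.1)%N && (p != (m2, m1))) Gt s p.1 p.2.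
Proof.
move=> hm; rewrite /Wt pair_big_dep /= (bigD1 (m2, m1)) /=; last by rewrite hm.
done.
Qed.

Lemma kernel (m1 m2 : 'I_k) (H : ('I_k -> C) -> C) : val m2 = (val m1).+1 ->
  (forall y, H (fun j => y (tperm m1 m2 j)) = H y) ->
  Phi (fun y => (y m1 - q^-1 * y m2) * H y) = 0.
Proof.
move=> hm hH.
set t := tperm m1 m2.
set T := fun s : 'S_k => Wt s * Ef s * ((z (s m1) - q^-1 * z (s m2)) * H (fun j => z (s j))).
have hT : forall s, T (t * s)%g = - T s.
  move=> s; rewrite /T !(Wt_split _ m1 m2 hm).
  have -> : \prod_(p : 'I_k * 'I_k | (p.2 < p.1)%N && (p != (m2, m1))) Gt (t * s)%g p.1 p.2
     = \prod_(p : 'I_k * 'I_k | (p.2 < p.1)%N && (p != (m2, m1))) Gt s p.1 p.2.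
    rewrite (reindex_inj (h := fun p : 'I_k * 'I_k => (t p.1, t p.2))) /=; last first.
      by move=> [a b] [c d] /= [/perm_inj -> /perm_inj ->].
    apply: eq_big => [[A B]|[A B] _] /=; first exact: (pair_cond m1 m2 A B hm).
    by rewrite /Gt !permM !tpermK.
  have -> : Ef (t * s)%g = Ef s.
    rewrite /Ef (reindex_inj (h := t) (@perm_inj _ t)) /=.
    by apply: eq_bigr => j _; rewrite permM tpermK.
  have -> : H (fun j => z ((t * s)%g j)) = H (fun j => z (s j)).
    rewrite -(hH (fun j => z (s j))); congr H; apply: functional_extensionality => j; by rewrite permM.
  rewrite /Gt !permM /t tpermL tpermR.
  set a := z (s m1); set b := z (s m2).
  have -> : a - b = - (b - a) by rewrite opprB.
  rewrite invrN; ring.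
have : \sum_s T s = - \sum_s T s.
  rewrite {1}(reindex_inj (mulgI t)) /= -sumrN.
  by apply: eq_bigr => s _; rewrite hT.
move/eqP; rewrite -subr_eq0 opprK -mulr2n mulrn_eq0 /= => /eqP.
by rewrite /Phi.
Qed.


Lemma step (m1 m2 : 'I_k) (H : ('I_k -> C) -> C) (al be : C) : val m2 = (val m1).+1 ->
  (forall y, H (fun j => y (tperm m1 m2 j)) = H y) ->
  Phi (fun y => (al - be * y m2) * H y) = Phi (fun y => (al - be * q * y m1) * H y).
Proof.
move=> hm hH; apply/eqP; rewrite -subr_eq0 -PhiB.
rewrite (@Phi_ext _ (fun y => (be * q) * ((y m1 - q^-1 * y m2) * H y))).
  by rewrite PhiZ (kernel _ _ _ hm hH) mulr0.
move=> y /=; by field.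
Qed.

Definition indep (lo hi : nat) (H : ('I_k -> C) -> C) :=
  forall y y' : 'I_k -> C, (forall j : 'I_k, (j < lo)%N || (hi <= j)%N -> y j = y' j) -> H y = H y'.

Lemma indepW lo hi lo' hi' H : (lo <= lo')%N -> (hi' <= hi)%N -> indep lo hi H -> indep lo' hi' H.
Proof. move=> h1 h2 hH y y' e; apply: hH => j hj; apply: e; lia. Qed.

Lemma indep_inv lo hi H (m1 m2 : 'I_k) : indep lo hi H -> (lo <= m1)%N -> (lo <= m2)%N ->
  (m1 < hi)%N -> (m2 < hi)%N -> forall y, H (fun j => y (tperm m1 m2 j)) = H y.
Proof.
move=> hH h1 h2 h3 h4 y; apply: hH => j hj; rewrite tpermD //; apply/eqP => e;
  rewrite -e in hj; lia.
Qed.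


Lemma shift1 (i d : nat) (c : C) H : (i + d < k)%N -> indep i (i + d).+1 H ->
  Phi (fun y => (eps - c * y (inord (i + d))) * H y)
  = Phi (fun y => (eps - c * q ^+ d * y (inord i)) * H y).
Proof.
elim: d c H => [|d IH] c H hk hH.
  by rewrite addn0; apply: Phi_ext => y; rewrite expr0 mulr1.
have e1 : ((inord (i + d) : 'I_k) : nat) = (i + d)%N by rewrite inordK //; lia.
have e2 : ((inord (i + d.+1) : 'I_k) : nat) = (i + d).+1 by rewrite inordK //; lia.
rewrite (step (inord (i+d)) (inord (i+d.+1)) H eps c); last first.
- apply: (indep_inv _ _ _ _ _ hH); rewrite ?e1 ?e2; lia.
- by rewrite /= e1 e2.
rewrite (IH (c * q) H); first last.
- apply: indepW hH; lia.
- lia.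
by apply: Phi_ext => y; rewrite exprS !mulrA.
Qed.


Definition P (i : nat) (y : 'I_k -> C) := \prod_(j : 'I_k | (j < i)%N) (eps - y j).

Lemma prod_split (F : 'I_k -> C) a m : (a <= m)%N -> (m < k)%N ->
  \prod_(j : 'I_k | (a <= j < m.+1)%N) F j = (\prod_(j : 'I_k | (a <= j < m)%N) F j) * F (inord m).
Proof.
move=> h1 h2; rewrite (bigD1 (inord m)) /=; last by rewrite inordK //; lia.
rewrite mulrC; congr (_ * _); apply: eq_bigl => j.
rewrite -val_eqE /= inordK //; apply/idP/idP; lia.
Qed.

Lemma P_succ i y : (i < k)%N -> P i.+1 y = P i y * (eps - y (inord i)).
Proof.
move=> hi; rewrite /P.
rewrite (eq_bigl (fun j : 'I_k => (0 <= j < i.+1)%N)) // prod_split //.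
Qed.

Lemma Qnz m : qpoch q q m != 0.
Proof.
rewrite /qpoch; elim: m => [|m IH]; first by rewrite big_ord0 oner_neq0.
rewrite big_ord_recr /= mulf_neq0 //.
rewrite subr_eq0 eq_sym lt_eqF // -exprSr exprn_ilt1 // ltW //.
Qed.

Lemma Q_succ m : qpoch q q m.+1 = qpoch q q m * (1 - q ^+ m.+1).
Proof. by rewrite /qpoch big_ord_recr /= exprSr. Qed.

Lemma Q0 : qpoch q q 0 = 1.
Proof. by rewrite /qpoch big_ord0. Qed.

Lemma coef0 N : c_eps q eps N.+2 0 = c_eps q eps N.+1 0 * ((1 - q ^+ N.+1) * eps).
Proof.
rewrite /c_eps !subn0 !subn1 /= Q_succ Q0 !expr0 invr1 exprS; ring.
Qed.

Lemma coefS N i : (i <= N)%N ->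
  c_eps q eps N.+2 i.+1 = c_eps q eps N.+1 i * q ^+ (N.+1 - i)
     + c_eps q eps N.+1 i.+1 * ((1 - q ^+ (N.+1 - i.+1)) * eps).
Proof.
move=> /subnKC <-; move: (N - i)%N => m.
have hQ := Qnz; rewrite /c_eps.
case: m => [|m].
  have e1 : ((i + 0).+2 - i.+1 - 1 = 0)%N by lia.
  have e2 : ((i + 0).+1 - i.+1 - 1 = 0)%N by lia.
  have e3 : ((i + 0).+1 - i.+1 = 0)%N by lia.
  have e4 : ((i + 0).+1 - i = 1)%N by lia.
  have e5 : ((i + 0).+2 - 1 = i.+1)%N by lia.
  have e6 : ((i + 0).+1 - 1 = i)%N by lia.
  rewrite ?e1 ?e2 ?e3 ?e4 ?e5 ?e6 !expr0 subrr mul0r mulr0 addr0 expr1.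
  move: (Qnz i) (Qnz i.+1) => h1 h2; rewrite exprS; field.
  by rewrite h2 h1.
have e1 : ((i + m.+1).+2 - i.+1 - 1 = m.+1)%N by lia.
have e2 : ((i + m.+1).+1 - i - 1 = m.+1)%N by lia.
have e3 : ((i + m.+1).+1 - i.+1 - 1 = m)%N by lia.
have e4 : ((i + m.+1).+1 - i.+1 = m.+1)%N by lia.
have e5 : ((i + m.+1).+1 - i = m.+2)%N by lia.
have e6 : ((i + m.+1).+2 - 1 = (i + m.+1).+1)%N by lia.
have e7 : ((i + m.+1).+1 - 1 = (i + m.+1))%N by lia.
rewrite ?e1 ?e2 ?e3 ?e4 ?e5 ?e6 ?e7.
move: (Qnz i) (Qnz (i + m.+1)) => h1 h2.
have h3 : 1 - q ^+ i.+1 != 0 by rewrite subr_eq0 eq_sym lt_eqF // exprn_ilt1 // ltW.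
rewrite (Q_succ (i + m.+1)) (Q_succ i).
move: h1 h2 h3; set Qi := qpoch q q i; set QN := qpoch q q (i + m.+1).
rewrite !addnS !exprS exprD => h1 h2 h3.
field.
by rewrite h3 h1.
Qed.


Lemma comb N (X : nat -> C) :
  \sum_(i < N.+1) c_eps q eps N.+1 i * (q ^+ (N.+1 - i) * X i.+1 + (1 - q ^+ (N.+1 - i)) * eps * X i)
  = \sum_(i < N.+2) c_eps q eps N.+2 i * X i.
Proof.
rewrite [RHS]big_ord_recl /= coef0.
transitivity (\sum_(i < N.+1) c_eps q eps N.+1 i * q ^+ (N.+1 - i) * X i.+1
   + \sum_(i < N.+2) c_eps q eps N.+1 i * ((1 - q ^+ (N.+1 - i)) * eps) * X i).
  rewrite [X in _ = _ + X]big_ord_recr /= subnn expr0 subrr mul0r mulr0 mul0r addr0 -big_split.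
  by apply: eq_bigr => i _ /=; ring.
rewrite [X in _ + X = _]big_ord_recl /= subn0 addrCA -big_split /=.
congr (_ + _).
apply: eq_bigr => i _ /=; rewrite /bump /= add1n (@coefS N i (ltn_ord i)) /=; ring.
Qed.


Lemma mainrec N R : (N < k)%N -> indep 0 N.+1 R ->
  Phi (fun y => (\prod_(j : 'I_k | (0 < j < N.+1)%N) (eps - y j)) * R y)
  = \sum_(i < N.+1) c_eps q eps N.+1 i * Phi (fun y => P i y * R y).
Proof.
elim: N R => [|N IH] R hN hR.
  rewrite big_ord1 /= /c_eps /= !expr0 Q0 invr1 !mul1r.
  apply: Phi_ext => y; rewrite /P big_pred0; last by move=> j; apply/negbTE/negP; lia.
  by rewrite big_pred0.
transitivity (Phi (fun y => (\prod_(j : 'I_k | (0 < j < N.+1)%N) (eps - y j))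
    * ((eps - y (inord N.+1)) * R y))).
  by apply: Phi_ext => y; rewrite prod_split // mulrA.
rewrite IH; first last.
- move=> y y' e /=; rewrite (hR y y').
    by rewrite e // inordK //; lia.
  by move=> j hj; apply: e; lia.
- lia.
rewrite -(comb N (fun j => Phi (fun y => P j y * R y))).
apply: eq_bigr => i _; congr (_ * _).
have hi : (i <= N)%N by have := ltn_ord i; lia.
set d := (N.+1 - i)%N.
have hid : (i + d = N.+1)%N by rewrite /d; lia.
transitivity (Phi (fun y => (eps - 1 * y (inord (i + d))) * (P i y * R y))).
  by apply: Phi_ext => y; rewrite hid mul1r; ring.
rewrite shift1; first last.
- move=> y y' e /=; congr (_ * _).
    by rewrite /P; apply: eq_bigr => j hj; rewrite e //; lia.
  by apply: hR => j hj; apply: e; lia.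
- lia.
rewrite -!PhiZ -PhiD; apply: Phi_ext => y; rewrite P_succ; last lia.
ring.
Qed.

End Sym.

Theorem lemma6p6 (C : numClosedFieldType) (q eps : C) (k : nat) (n : int) :
  0 < q -> q < 1 -> (1 <= k)%N ->
  approx_rel q eps (fun _ : 'I_k => n)
    (fun w => \prod_(j : 'I_k | (0 < j)%N) (eps - w j))
    (fun w => \sum_(i < k) c_eps q eps k i * \prod_(j : 'I_k | (j < i)%N) (eps - w j)).
Proof.
move=> hq0 hq1; case: k => [//|K] _ z _ _.
have q0 : q != 0 by move: hq0; rewrite lt0r => /andP[].
change (@Phi _ q eps K n z (fun w => \prod_(j : 'I_K.+1 | (0 < j)%N) (eps - w j)
  - \sum_(i < K.+1) c_eps q eps K.+1 i * \prod_(j : 'I_K.+1 | (j < i)%N) (eps - w j)) = 0).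
rewrite PhiB; apply/eqP; rewrite subr_eq0; apply/eqP.
transitivity (@Phi _ q eps K n z (fun y => (\prod_(j : 'I_K.+1 | (0 < j < K.+1)%N) (eps - y j)) * 1)).
  by apply: Phi_ext => y; rewrite mulr1; apply: eq_bigl => j; rewrite ltn_ord andbT.
rewrite mainrec //.
rewrite (@Phi_sum _ q eps K n z _ (fun i w => c_eps q eps K.+1 i * \prod_(j : 'I_K.+1 | (j < i)%N) (eps - w j))).
apply: eq_bigr => i _; rewrite PhiZ; congr (_ * _).
by apply: Phi_ext => y; rewrite /P mulr1.
Qed.
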